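(* Let $T$ be a lifted graph, $F\colon T\to T$ a continuous sun-like map of degree 1 with branches $(X^i)_{i\in\Lambda}$, ${\cal P}=\{X^i_j\}$ a basic partition of $F$ and ${\cal G}$ its covering graph. Let $\alpha,\beta$ be vertices of ${\cal G}$ with an arrow $\alpha\to\beta$. Then there exist $A_0,\dots,A_n,A_{n+1}\in{\cal P}$ and $k\in\{1,\dots,N_{\ell(A_n)}\}$ such that $\alpha=A_0\dots A_n/\!\sim$, $\beta=A_0\dots A_nA_{n+1}/\!\sim$ and $A_{n+1}=X^{\ell(A_n)}_k$. Moreover, for all $j\in\{1,\dots,k-1\}$, $\langle\alpha\rangle$ positively $F$-covers $X^{\ell(A_n)}_j+p(A_n)$, and $\alpha\to X^{\ell(A_n)}_j$ is an arrow in ${\cal G}$.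
   Context: A lifted graph is a connected topological space $T$ with a homeomorphism $h\colon\mathbb R\to h(\mathbb R)\subset T$ and a homeomorphism $\tau\colon T\to T$ such that $\tau(h(x))=h(x+1)$, the closure of each connected component of $T\setminus h(\mathbb R)$ is a topological finite graph meeting $h(\mathbb R)$ in exactly one point, and only finitely many such components have closure meeting $h([0,1])$. Identify $h(\mathbb R)$ with $\mathbb R$, write $x+m:=\tau^m(x)$; $r_{\mathbb R}\colon T\to\mathbb R$ is the identity on $\mathbb R$ and maps a component $C$ of $T\setminus\mathbb R$ to the point $\overline C\cap\mathbb R$. $F$ has degree 1 if $F(x+1)=F(x)+1$. Let $T_{\mathbb R}:=\overline{\bigcup_{n\ge0}F^n(\mathbb R)}$, $X:=\overline{T\setminus T_{\mathbb R}}\cap r_{\mathbb R}^{-1}([0,1))$. $F$ is sun-like if $(T\setminus T_{\mathbb R})\cap r_{\mathbb R}^{-1}([0,1))$ consists of finitely many intervals with pairwise disjoint closures $X^i$, $i\in\Lambda$ (branches), each a compact interval meeting $T_{\mathbb R}$ in one endpoint $\min X^i$ (fixing the order of $X^i$). For $j\in\Lambda$, $r_j\colon T\to X^j$ is $r_j(x)=x$ for $x\in X^j$ and $r_j(x)=\min X^j$ otherwise. Positive covering: for nonempty compact intervals $I\subset X^i$, $J\subset X^j$, $n\ge1$, $p\in\mathbb Z$, $I$ positively $F^n$-covers $J+p$ if there exist $x\le y$ in $I$ with $r_j(F^n(x)-p)\le\min J$ and $\max J\le r_j(F^n(y)-p)$ (order of $X^j$). A basic partition is a finite family ${\cal P}=\{X^i_j: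 i\in\Lambda, 1\le j\le N_i\}$ of pairwise disjoint nonempty compact intervals $X^i_1<\dots<X^i_{N_i}$ in $X^i$, with $\ell(X^i_j)\in\Lambda$, $p(X^i_j)\in\mathbb Z$, such that $F(X^i_j)\subset(X^{\ell(X^i_j)}+p(X^i_j))\cup\mathrm{Int}(T_{\mathbb R})$, $F(\min X^i_j)=\min X^{\ell(X^i_j)}+p(X^i_j)$, and $F(X\setminus\bigcup X^i_j)\cap(X+\mathbb Z)=\emptyset$. For $A_0,\dots,A_n\in{\cal P}$, $\langle A_0\dots A_n\rangle:=F^n(\{x\in T: F^i(x)\in A_i+\mathbb Z,\ 0\le i\le n\})\cap X$. $A_0\dots A_n\sim B_0\dots B_m$ iff for some $k\le\min(n,m)$, $A_{n-i}=B_{m-i}$ ($0\le i\le k$) and $\langle A_0\dots A_{n-k}\rangle=A_{n-k}=B_{m-k}=\langle B_0\dots B_{m-k}\rangle$. The covering graph ${\cal G}$: vertices are classes $A_0\dots A_n/\!\sim$ with $\langle A_0\dots A_n\rangle\ne\emptyset$; arrow $\alpha\to\beta$ iff $\alpha=A_0\dots A_n/\!\sim$, $\beta=A_0\dots A_nA_{n+1}/\!\sim$ for some $A_i\in{\cal P}$. For $B\in{\cal P}$, the vertex $B/\!\sim$ is denoted $B$. *)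

(* Defs.v *)
(* The real line is an arbitrary
   realType R (all realTypes are isomorphic to the reals). *)
From HB Require Import structures.
From mathcomp Require Import all_boot all_order all_algebra.
From mathcomp Require Import all_classical all_reals.
From mathcomp Require Import topology normedtype.
Set Implicit Arguments.
Unset Strict Implicit.
Unset Printing Implicit Defensive.
Import Order.TTheory GRing.Theory Num.Theory numFieldNormedType.Exports.
Local Open Scope classical_set_scope.
Local Open Scope ring_scope.

Section LiftedGraphs.
Variable R : realType.

Section Topo.
Variable T : topologicalType.

Definition embedding_on (A : set R) (g : R -> T) : Prop :=
  [/\ {within A, continuous g},
      {in A &, injective g} &
      forall U : set R, open U ->
        exists2 V : set T, open V & g @` (U `&` A) = V `&` (g @` A)].

Definition arc (g : R -> T) : Prop := embedding_on `[0, 1] g.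

Definition hausdorff_subspace (G : set T) : Prop :=
  forall x y, G x -> G y -> x <> y ->
    exists U V : set T, [/\ open U, open V, U x, V y & U `&` V `&` G = set0].

Definition finite_graph (G : set T) : Prop :=
  [/\ G !=set0, connected G, hausdorff_subspace G &
  exists (n : nat) (a : 'I_n -> R -> T),
    [/\ forall i, arc (a i),
        G = \bigcup_(i in [set: 'I_n]) (a i @` `[0, 1]) &
        forall i j, i != j ->
          (a i @` `[0, 1]) `&` (a j @` `[0, 1]) `<=`
            ([set a i 0; a i 1] `&` [set a j 0; a j 1])]].

End Topo.

Variable T : topologicalType.
Variables (h : R -> T) (tau tau' : T -> T).

Definition comp_out (x : T) : set T := connected_component (~` range h) x.

(* Definition of lifted graph.  tau' is the (necessarily unique) inverse of
   the homeomorphism tau. *)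
Definition lifted_graph : Prop :=
  [/\ connected [set: T] /\ embedding_on setT h,
      [/\ cancel tau tau', cancel tau' tau, continuous tau & continuous tau'],
      (forall x : R, tau (h x) = h (x + 1)),
      (forall x : T, ~ range h x ->
         finite_graph (closure (comp_out x)) /\
         exists y : R, closure (comp_out x) `&` range h = [set h y]) &
      finite_set [set C : set T | exists x, ~ range h x /\ C = comp_out x /\
                   closure C `&` (h @` `[0, 1]) !=set0]].

(* x + m := tau^m (x) *)
Definition shift (m : int) (x : T) : T :=
  match m with
  | Posz n => iter n tau x
  | Negz n => iter n.+1 tau' x
  end.

Definition shift_set (A : set T) (m : int) : set T := shift m @` A.
Definition shiftZ (A : set T) : set T := \bigcup_(m in [set: int]) shift_set A m.

(* r_R(x) = y  (retraction onto the real line) *)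
Definition rR_rel (x : T) (y : R) : Prop :=
  h y = x \/ (~ range h x /\ closure (comp_out x) (h y)).

Definition rR_pre01 : set T := [set x | exists2 y, rR_rel x y & 0 <= y < 1].

Variable F : T -> T.

Definition degree_one : Prop := forall x, F (tau x) = tau (F x).

Definition TR : set T :=
  closure (\bigcup_(n in [set: nat]) (iter n F @` range h)).

Definition Xset : set T := closure (~` TR) `&` rR_pre01.

(* Branches: for i in the finite type L, X^i = b i ([0,1]), b i an arc with
   min X^i = b i 0.  The order on X^i is the one transported from [0,1]. *)
Variables (L : finType) (b : L -> R -> T).

Definition branch (i : L) : set T := b i @` `[0, 1].

Definition sun_like : Prop :=
  [/\ forall i, arc (b i),
      (forall i j, i != j -> branch i `&` branch j = set0),
      (forall i, branch i `&` TR = [set b i 0]) &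
      (~` TR) `&` rR_pre01 = \bigcup_(i in [set: L]) (b i @` `]0, 1])].

Definition le_br (i : L) (x y : T) : Prop :=
  exists s t : R, [/\ s \in `[0, 1], t \in `[0, 1], b i s = x, b i t = y & s <= t].

Definition rj (j : L) (x : T) : T := if `[< branch j x >] then x else b j 0.

Definition br_interval (i : L) (s t : R) : set T := b i @` `[s, t].

Definition is_br_interval (i : L) (I : set T) : Prop :=
  exists s t : R, [/\ 0 <= s, s <= t, t <= 1 & I = br_interval i s t].

(* I (a nonempty compact interval of X^i) positively F^n-covers J + p, where
   J = b j ([s,t]) is a nonempty compact interval of X^j (n >= 1). *)
Definition pcovers (n : nat) (i : L) (I : set T) (j : L) (s t : R) (p : int) : Prop :=
  [/\ (0 < n)%N /\ is_br_interval i I, 0 <= s, s <= t, t <= 1 &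
      exists x y, [/\ I x, I y, le_br i x y,
        le_br j (rj j (shift (- p) (iter n F x))) (b j s) &
        le_br j (b j t) (rj j (shift (- p) (iter n F y)))]].

(* X^i_k (k : 'I_(N i), 0-based; the paper's index k+1) is
   b i ([s i k, t i k]). *)
Variables (N : L -> nat) (s t : forall i : L, 'I_(N i) -> R).
Definition pidx := {i : L & 'I_(N i)}.
Variables (ell : pidx -> L) (pp : pidx -> int).

Definition cell (A : pidx) : set T := br_interval (tag A) (s (tagged A)) (t (tagged A)).
Definition mkp (i : L) (k : 'I_(N i)) : pidx := Tagged (fun i => 'I_(N i)) k.

Definition basic_partition : Prop :=
  [/\ (forall i (k : 'I_(N i)), 0 <= s k /\ s k <= t k /\ t k <= 1),
      (forall i (k k' : 'I_(N i)), (k < k')%N -> t k < s k'),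
      (forall A : pidx, F @` cell A `<=`
          shift_set (branch (ell A)) (pp A) `|` interior TR),
      (forall A : pidx, F (b (tag A) (s (tagged A))) = shift (pp A) (b (ell A) 0)) &
      (F @` (Xset `\` \bigcup_(A in [set: pidx]) cell A)) `&` shiftZ Xset = set0].

(* <A_0 ... A_n> for the word w = [:: A_0; ...; A_n] *)
Definition bracket (w : seq pidx) : set T :=
  [set z | exists x, (forall (i : nat) (A : pidx), onth w i = Some A ->
                        shiftZ (cell A) (iter i F x))
                     /\ z = iter (size w).-1 F x] `&` Xset.

(* the relation ~ on (nonempty) words; n = size w - 1, m = size v - 1 *)
Definition wsim (w v : seq pidx) : Prop :=
  w <> [::] /\ v <> [::] /\
  exists k : nat, [/\ (k <= (size w).-1)%N, (k <= (size v).-1)%N,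
    (forall i, (i <= k)%N -> onth w ((size w).-1 - i) = onth v ((size v).-1 - i)) &
    exists A : pidx, [/\ onth w ((size w).-1 - k) = Some A,
                         onth v ((size v).-1 - k) = Some A,
                         bracket (take ((size w).-1 - k).+1 w) = cell A &
                         bracket (take ((size v).-1 - k).+1 v) = cell A]].

Definition wclass (w : seq pidx) : set (seq pidx) := wsim w.

Definition is_vertex (a : set (seq pidx)) : Prop :=
  exists2 w : seq pidx, w <> [::] /\ bracket w !=set0 & a = wclass w.

Definition arrow (a c : set (seq pidx)) : Prop :=
  [/\ is_vertex a, is_vertex c &
      exists (w : seq pidx) (A : pidx), w <> [::] /\ a = wclass w /\ c = wclass (rcons w A)].

Definition vtx (B : pidx) : set (seq pidx) := wclass [:: B].

End LiftedGraphs.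

(* Main.v *)
Require Import Defs.
From HB Require Import structures.
From mathcomp Require Import all_boot all_order all_algebra.
From mathcomp Require Import all_classical all_reals.
From mathcomp Require Import topology normedtype.
From mathcomp Require Import zify ring lra.
Import Order.TTheory GRing.Theory Num.Theory numFieldNormedType.Exports.
Local Open Scope classical_set_scope.
Local Open Scope ring_scope.


Unset Printing Implicit Defensive.

Section Main.
Variables (R : realType) (T : topologicalType)
  (h : R -> T) (tau tau' : T -> T) (F : T -> T)
  (L : finType) (b : L -> R -> T)
  (N : L -> nat) (s t : forall i : L, 'I_(N i) -> R)
  (ell : pidx N -> L) (pp : pidx N -> int).
Hypothesis HLG : lifted_graph h tau tau'.
Hypothesis HFc : continuous F.
Hypothesis HD : degree_one tau F.
Hypothesis HS : sun_like h F b.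
Hypothesis HB : basic_partition h tau tau' F b s t ell pp.

Local Notation sh := (Defs.shift tau tau').

Let tauK : cancel tau tau'. Proof. by case: HLG => _ []. Qed.
Let tau'K : cancel tau' tau. Proof. by case: HLG => _ []. Qed.
Let tauc : continuous tau. Proof. by case: HLG => _ []. Qed.
Let tau'c : continuous tau'. Proof. by case: HLG => _ []. Qed.
Let htau : forall x : R, tau (h x) = h (x + 1). Proof. by case: HLG. Qed.
Let hinj : injective h.
Proof. by case: HLG => -[_ [_ hi _]] _ _ _ _ x y; apply: hi; rewrite inE. Qed.

Lemma int_ind2 (P : int -> Prop) : P 0 -> (forall m, P m -> P (m + 1)) ->
  (forall m, P m -> P (m - 1)) -> forall m, P m.
Proof.
move=> P0 Pu Pd; case=> n.
  elim: n => // n IH; have -> : Posz n.+1 = Posz n + 1 by lia.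
  exact: Pu.
rewrite NegzE; elim: n => [|n IH]; first by have := Pd 0 P0; rewrite sub0r.
have -> : - (Posz n.+2) = - Posz n.+1 - 1 by lia.
exact: Pd.
Qed.

Lemma shiftS m x : sh (m + 1) x = tau (sh m x).
Proof.
case: m => [n|[|n]].
- by rewrite (_ : _ + _ = Posz n.+1) //; lia.
- by rewrite (_ : _ + _ = 0) //=; lia.
- by rewrite (_ : _ + _ = Negz n) //=; lia.
Qed.

Lemma shiftP m x : sh (m - 1) x = tau' (sh m x).
Proof.
case: m => [[|n]|n].
- by rewrite (_ : _ - _ = Negz 0) //=; lia.
- by rewrite (_ : _ - _ = Posz n) /= ?tauK //; lia.
- by rewrite (_ : _ - _ = Negz n.+1) //=; lia.
Qed.

Lemma shiftD a c x : sh (a + c) x = sh a (sh c x).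
Proof.
elim/int_ind2: a x => [|m IH|m IH] x; first by rewrite add0r.
- by rewrite -addrAC shiftS IH shiftS.
- by rewrite -addrAC shiftP IH shiftP.
Qed.

Lemma shiftK m x : sh (- m) (sh m x) = x.
Proof. by rewrite -shiftD addNr. Qed.
Lemma shiftKV m x : sh m (sh (- m) x) = x.
Proof. by rewrite -shiftD addrN. Qed.
Lemma shift_inj m : injective (sh m).
Proof. by move=> x y e; rewrite -(shiftK m x) e shiftK. Qed.

Let Ftau' x : F (tau' x) = tau' (F x).
Proof. by rewrite -{2}(tau'K x) HD tauK. Qed.

Lemma shiftF m x : F (sh m x) = sh m (F x).
Proof.
elim/int_ind2: m x => [|m IH|m IH] x //.
- by rewrite !shiftS HD IH.
- by rewrite !shiftP Ftau' IH.
Qed.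

Lemma iter_shift n m x : iter n F (sh m x) = sh m (iter n F x).
Proof. by elim: n => //= n ->; rewrite shiftF. Qed.

Lemma shift_h m r : sh m (h r) = h (r + m%:~R).
Proof.
elim/int_ind2: m r => [|m IH|m IH] r; first by rewrite addr0.
- by rewrite shiftS IH htau intrD addrA.
- rewrite shiftP IH intrB (_ : r + m%:~R = (r + (m%:~R - 1)) + 1); last by ring.
  by rewrite -htau tauK.
Qed.

Lemma shift_cont m : continuous (sh m).
Proof.
elim/int_ind2: m => [|m IH|m IH]; first by move=> x; exact: cvg_id.
- have -> : sh (m + 1) = tau \o sh m by apply: funext => x; rewrite shiftS.
  by move=> x; apply: continuous_comp; [exact: IH|exact: tauc].
- have -> : sh (m - 1) = tau' \o sh m by apply: funext => x; rewrite shiftP.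
  by move=> x; apply: continuous_comp; [exact: IH|exact: tau'c].
Qed.


Lemma cont_closure (f : T -> T) (A : set T) : continuous f ->
  f @` closure A `<=` closure (f @` A).
Proof.
move=> fc _ [x clx <-] B nB.
have [y [Ay By]] := clx _ (fc x _ nB).
by exists (f y); split => //; exists y.
Qed.

Local Notation TRs := (TR h F).

Lemma range_TR : range h `<=` TRs.
Proof.
move=> _ [r _ <-]; apply: subset_closure; exists 0%N => //.
by exists (h r) => //; exists r.
Qed.

Lemma shift_TR m x : TRs x -> TRs (sh m x).
Proof.
move=> Tx; have : (sh m @` TRs) (sh m x) by exists x.
move/(cont_closure _ _ (shift_cont m)); apply: closureS.
move=> _ [y [n _ [_ [r _ <-] <-]] <-].
rewrite -iter_shift shift_h; exists n => //.
by exists (h (r + m%:~R)) => //; exists (r + m%:~R).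
Qed.

Lemma notIntTR q z : Xset h F z -> ~ (TRs)° (sh q z).
Proof.
move=> [clz _] Iz.
have nb : nbhs z (sh q @^-1` (TRs)°).
  by apply: (shift_cont q z); apply: nbhs_interior.
have [w [nTw /= Iw]] := clz _ nb.
apply: nTw; rewrite -(shiftK q w); apply: shift_TR.
exact: interior_subset.
Qed.

Lemma nrange_shift m x : ~ range h x -> ~ range h (sh m x).
Proof.
move=> nx [r _ e]; apply: nx; exists (r + (- m)%:~R) => //.
by rewrite -shift_h e shiftK.
Qed.

Lemma comp_shift m x : ~ range h x ->
  sh m @` comp_out h x `<=` comp_out h (sh m x).
Proof.
move=> nx; apply: connected_component_max.
- by exists x => //; apply: connected_component_refl.
- move=> _ [y /connected_component_sub ny <-]; exact: nrange_shift.
- apply: connected_continuous_connected; first exact: component_connected.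
  by apply: continuous_subspaceT; apply: shift_cont.
Qed.

Let hcomp : forall x, ~ range h x ->
  exists y, closure (comp_out h x) `&` range h = [set h y].
Proof. by case: HLG => _ _ _ H _ x /H []. Qed.

Lemma rR_shift m x y : rR_rel h x y -> rR_rel h (sh m x) (y + m%:~R).
Proof.
case=> [<-|[nx clx]]; first by left; rewrite shift_h.
right; split; first exact: nrange_shift.
rewrite -(shift_h m y); apply: (closureS (comp_shift m x nx)).
by apply: (cont_closure _ _ (shift_cont m)); exists (h y).
Qed.

Lemma rR_fun x y1 y2 : rR_rel h x y1 -> rR_rel h x y2 -> y1 = y2.
Proof.
case=> [<-|[nx c1]].
  by case=> [/hinj //|[nx _]]; exfalso; apply: nx; exists y1.
case=> [e|[_ c2]]; first by exfalso; apply: nx; exists y2.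
have [y0 E] := hcomp x nx.
have : (closure (comp_out h x) `&` range h) (h y1) by split => //; exists y1.
have : (closure (comp_out h x) `&` range h) (h y2) by split => //; exists y2.
by rewrite E => /= /hinj -> /hinj ->.
Qed.

Lemma int_small (m : int) : -1 < m%:~R :> R -> m%:~R < 1 :> R -> m = 0.
Proof.
move=> h1 h2.
have h1' : ((-1)%:~R : R) < m%:~R by [].
have h2' : (m%:~R : R) < (1%:Z)%:~R by [].
rewrite ltr_int in h1'; rewrite ltr_int in h2'; lia.
Qed.

Lemma rR01_shift m x : rR_pre01 h x -> rR_pre01 h (sh m x) -> m = 0.
Proof.
move=> [y rx /andP[y0 y1]] [y' rx' /andP[y0' y1']].
have e := rR_fun _ _ _ rx' (rR_shift m _ _ rx).
apply: int_small; rewrite -[m%:~R](addKr y) -e; lra.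
Qed.


Lemma itvP (a c u : R) : `[a, c]%classic u <-> a <= u <= c.
Proof. by rewrite /= in_itv. Qed.

Lemma itv_conn (i : interval R) : connected [set` i].
Proof. exact/connected_intervalP/interval_is_interval. Qed.

Let bcont i : {within `[0, 1], continuous (b i)}.
Proof. by case: HS => /(_ i) [] . Qed.
Let binj i u v : `[0, 1]%classic u -> `[0, 1]%classic v -> b i u = b i v -> u = v.
Proof. by case: HS => /(_ i) [] _ bi _ _ _ _ /mem_set ? /mem_set ?; apply: bi. Qed.
Let bopen i (U : set R) : open U ->
  exists2 V : set T, open V & b i @` (U `&` `[0, 1]%classic) = V `&` branch b i.
Proof. by case: HS => /(_ i) [] _ _ bo _ _ _; apply: bo. Qed.
Let bdisj i j : i != j -> branch b i `&` branch b j = set0.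
Proof. by case: HS => _ H _ _; apply: H. Qed.
Let bTR i : branch b i `&` TRs = [set b i 0].
Proof. by case: HS => _ _ H _; apply: H. Qed.
Let bX : (~` TRs) `&` rR_pre01 h = \bigcup_(i in [set: L]) (b i @` `]0, 1]%classic).
Proof. by case: HS => _ _ _ H. Qed.

Lemma b_notTR i v : 0 < v <= 1 -> ~ TRs (b i v).
Proof.
move=> /andP[v0 v1] Tv.
have : (branch b i `&` TRs) (b i v) by split => //; exists v => //; apply/itvP; lra.
rewrite bTR => /= e.
have e' : v = 0 by apply: (binj i) e; apply/itvP; lra.
lra.
Qed.


Lemma b_rR i v : 0 < v <= 1 -> rR_pre01 h (b i v).
Proof.
move=> hv.
have : (\bigcup_(i in [set: L]) (b i @` `]0, 1]%classic)) (b i v).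
  by exists i => //; exists v => //=; rewrite in_itv.
by rewrite -bX => -[].
Qed.

Lemma b0_closure i : closure (b i @` `]0, 1]%classic) (b i 0).
Proof.
move=> B nB.
have H := bcont i 0 B nB.
have : within `[0, 1]%classic (nbhs (0:R)) (b i @^-1` B).
  rewrite nbhs_subspace_in; [exact: H|by apply/itvP; lra].
move=> /nbhs_ballP [e /= e0 He].
pose u := Num.min (e / 2) 1.
have u0 : 0 < u by rewrite lt_min; apply/andP; split => //; lra.
have u1 : u <= 1 by rewrite ge_min lexx orbT.
have ue : u < e by rewrite gt_min; apply/orP; left; lra.
exists (b i u); split; first by exists u => //=; rewrite in_itv /=; apply/andP.
apply: He; last by apply/itvP; lra.
by rewrite -ball_normE /= sub0r normrN gtr0_norm.
Qed.


Lemma oc_cc : `]0, 1]%classic `<=` (`[0, 1]%classic : set R).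
Proof. by move=> u; rewrite /= !in_itv /= => /andP[/ltW -> ->]. Qed.

Lemma branch_conn i : connected (branch b i).
Proof. exact: connected_continuous_connected (itv_conn _) (bcont i). Qed.

Lemma branch_X i : branch b i `<=` Xset h F.
Proof.
move=> _ [v /itvP v01 <-].
have [v0|v0] := eqVneq v 0; last first.
  have hv : 0 < v <= 1 by apply/andP; split; [rewrite lt_neqAle eq_sym v0; case/andP: v01|case/andP: v01].
  by split; [apply: subset_closure; apply: b_notTR|apply: b_rR].
subst v; split.
  apply: (closureS _ (b0_closure i)).
  by move=> _ [u /= hu <-]; apply: b_notTR; rewrite in_itv /= in hu.
have h1 : (0 : R) < 1 <= (1 : R) by apply/andP; split; lra.
have [y rb1 y01] := b_rR i 1 h1.
exists y => //.
have nb1 : ~ range h (b i 1) by move=> r; apply: (b_notTR i 1 h1); apply: range_TR.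
case: rb1 => [e|[_ cl1]]; first by exfalso; apply: nb1; exists y.
set C := comp_out h (b i 1).
have sub : b i @` `]0, 1]%classic `<=` C.
  apply: connected_component_max.
  - by exists 1 => //=; rewrite in_itv /= ltr01 lexx.
  - move=> _ [u /= hu <-] r; apply: (b_notTR i u); last exact: range_TR.
    by rewrite in_itv /= in hu.
  - apply: connected_continuous_connected (itv_conn _) _.
    exact: continuous_subspaceW oc_cc (bcont i).
have clC0 : closure C (b i 0) := closureS sub (b0_closure i).
have [[y' _ e0]|n0] := pselect (range h (b i 0)).
  left; have [y0 E] := hcomp _ nb1.
  have : (closure C `&` range h) (h y) by split => //; exists y.
  have : (closure C `&` range h) (h y') by split => //; rewrite e0.
  by rewrite E => /= e1 e2; rewrite e2 -e1.
right; split => //.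
have sb : branch b i `<=` comp_out h (b i 0).
  apply: connected_component_max; [by exists 0 => //; apply/itvP; lra| |exact: branch_conn].
  move=> _ [u /itvP hu <-]; have [->|u0] := eqVneq u 0; first exact: n0.
  move=> r; apply: (b_notTR i u); last exact: range_TR.
  by case/andP: hu => hu1 ->; rewrite andbT lt_neqAle eq_sym u0.
have cc01 : comp_out h (b i 0) (b i 1) by apply: sb; exists 1 => //; apply/itvP; lra.
apply: (closureS _ cl1) => z Cz.
exact: connected_component_trans cc01 Cz.
Qed.


Let bp1 i k : 0 <= s i k /\ s i k <= t i k /\ t i k <= 1.
Proof. by case: HB => H _ _ _ _; apply: H. Qed.
Let bp2 i (k k' : 'I_(N i)) : (k < k')%N -> t i k < s i k'.
Proof. by case: HB => _ H _ _ _; apply: H. Qed.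
Let bp3 A : F @` cell b s t A `<=` shift_set tau tau' (branch b (ell A)) (pp A) `|` (TRs)°.
Proof. by case: HB => _ _ H _ _; apply: H. Qed.
Let bp4 A : F (b (tag A) (s (tag A) (tagged A))) = sh (pp A) (b (ell A) 0).
Proof. by case: HB => _ _ _ H _; apply: H. Qed.

Local Notation cellA := (cell b s t).
Local Notation shZ := (shiftZ tau tau').
Local Notation brk := (bracket h tau tau' F b s t).

Lemma cellE A : cellA A = b (tag A) @` `[s (tag A) (tagged A), t (tag A) (tagged A)]%classic.
Proof. by []. Qed.

Lemma cell_branch A : cellA A `<=` branch b (tag A).
Proof.
move=> _ [u /itvP hu <-]; exists u => //; apply/itvP.
have := bp1 (tag A) (tagged A); lra.
Qed.

Lemma cell_X A : cellA A `<=` Xset h F.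
Proof. by move=> z /cell_branch; apply: branch_X. Qed.

Lemma X_shift m x : Xset h F x -> Xset h F (sh m x) -> m = 0.
Proof. by move=> [_ ?] [_ ?]; apply: (rR01_shift m x). Qed.

Lemma shZP S x : shZ S x <-> exists m c, S c /\ sh m c = x.
Proof.
split; first by move=> [m _ [c Sc <-]]; exists m, c.
by move=> [m [c [Sc <-]]]; exists m => //; exists c.
Qed.

Lemma shZ_shift S m x : shZ S x -> shZ S (sh m x).
Proof.
move/shZP => [m' [c [Sc <-]]]; apply/shZP; exists (m + m'), c.
by rewrite shiftD.
Qed.

Lemma shZ_self S x : S x -> shZ S x.
Proof. by move=> Sx; apply/shZP; exists 0, x. Qed.

Lemma cell_shZ A z : shZ (cellA A) z -> Xset h F z -> cellA A z.
Proof.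
move/shZP => [m [c [Ac <-]]] Xz.
by have m0 := X_shift m c (cell_X A c Ac) Xz; subst m.
Qed.

Lemma onth_rcons (X : Type) (w : seq X) a i :
  onth (rcons w a) i = if (i < size w)%N then onth w i
                       else if i == size w then Some a else None.
Proof.
rewrite -cats1 onth_cat; case: ltnP => // hi.
have [->|ne] := eqVneq i (size w); first by rewrite subnn.
by rewrite onth_default //=; lia.
Qed.

Lemma onth_rconsS (X : Type) (w : seq X) a c i :
  onth w i = Some c -> onth (rcons w a) i = Some c.
Proof.
move=> e; have : (i < size w)%N by rewrite -onthTE e.
by rewrite onth_rcons => ->.
Qed.

Lemma brk1 A : brk [:: A] = cellA A.
Proof.
apply/seteqP; split.
  move=> z [[x [Hx ->]] Xz] /=; apply: cell_shZ => //.
  by apply: (Hx 0%N A).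
move=> z Az; split; last exact: (cell_X _ _ Az).
exists z; split => //= i A' /onth1P [-> <-]; exact: shZ_self.
Qed.

Lemma brk_sub w A : brk (rcons w A) `<=` cellA A.
Proof.
move=> z [[x [Hx ->]] Xz]; apply: cell_shZ => //.
by apply: Hx; rewrite size_rcons /= onth_rcons ltnn eqxx.
Qed.


Lemma brk_rec x A B : brk (rcons (rcons x A) B) =
  [set c | cellA B c /\ exists2 y, brk (rcons x A) y & F y = sh (pp A) c].
Proof.
apply/seteqP; split.
  move=> z0 [[x0 [Hx ->]] Xz].
  rewrite !size_rcons /= in Xz *.
  have HA : shZ (cellA A) (iter (size x) F x0).
    by apply: Hx; rewrite !onth_rcons size_rcons ltnS leqnn ltnn eqxx.
  have HBz : shZ (cellA B) (iter (size x).+1 F x0).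
    by apply: Hx; rewrite !onth_rcons size_rcons ltnn eqxx.
  move/shZP: HA => [m [c0 [c0A e0]]].
  split; first exact: cell_shZ.
  exists c0.
    split; last exact: (cell_X _ _ c0A).
    exists (sh (- m) x0); split.
      move=> i A' hi; rewrite iter_shift; apply: shZ_shift; apply: Hx.
      exact: onth_rconsS.
    by rewrite size_rcons /= iter_shift -e0 shiftK.
  rewrite -e0 shiftF in Xz *.
  have : (F @` cellA A) (F c0) by exists c0.
  move/bp3 => [[e eb ee]|Ic]; last first.
    by have := notIntTR (- m) _ Xz; rewrite shiftK.
  have ez' : sh m (F c0) = sh (m + pp A) e by rewrite -ee shiftD.
  have := X_shift (m + pp A) e (branch_X _ _ eb); rewrite -ez' => /(_ Xz) mp.
  have -> : pp A = - m by lra.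
  by rewrite shiftK.
move=> c [cB [y [[x0 [Hx ->]] Xy] Fy]]; split; last exact: (cell_X _ _ cB).
rewrite size_rcons /= in Fy.
have key : iter (size (rcons (rcons x A) B)).-1 F (sh (- pp A) x0) = c.
  by rewrite !size_rcons /= iter_shift shiftF Fy shiftK.
exists (sh (- pp A) x0); split => //.
move=> i A'; rewrite onth_rcons.
case: ifP => hi.
  move=> hA; rewrite iter_shift; apply: shZ_shift; exact: Hx.
case: eqP => // -> [<-].
by move: key; rewrite size_rcons /= => ->; apply: shZ_self.
Qed.


Local Notation wsimP := (wsim h tau tau' F b s t).

Lemma brk_cat r : forall x y A, brk (rcons x A) = brk (rcons y A) ->
  brk (rcons x A ++ r) = brk (rcons y A ++ r).
Proof.
elim: r => [|B r IH] x y A e; first by rewrite !cats0.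
rewrite -!cat_rcons; apply: IH.
by rewrite !brk_rec e.
Qed.

Lemma take_onth (w : seq (pidx N)) n A : onth w n = Some A ->
  take n.+1 w = rcons (take n w) A.
Proof.
move=> e; have hn : (n < size w)%N by rewrite -onthTE e.
by rewrite (take_nth A hn) (onth_nth A _ _ _ e).
Qed.

Lemma wsim_brk p v : wsimP p v -> brk p = brk v.
Proof.
move=> [pn [vn [k [kp kv agr [A [eA1 eA2 b1 b2]]]]]].
set ip := ((size p).-1 - k)%N in eA1 b1.
set iv := ((size v).-1 - k)%N in eA2 b2.
have sp : size p = (size p).-1.+1 by case: (p) pn.
have sv : size v = (size v).-1.+1 by case: (v) vn.
have hd : drop ip.+1 p = drop iv.+1 v.
  apply: (@eq_from_nth _ A).
    rewrite !size_drop /ip /iv; lia.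
  move=> i; rewrite size_drop /ip => hi.
  rewrite !nth_drop -!odflt_onth.
  have := agr (k.-1 - i)%N; rewrite /iv.
  have -> : ((size p).-1 - (k.-1 - i))%N = (((size p).-1 - k).+1 + i)%N by lia.
  have -> : ((size v).-1 - (k.-1 - i))%N = (((size v).-1 - k).+1 + i)%N by lia.
  by move=> ->//; lia.
rewrite -(cat_take_drop ip.+1 p) -(cat_take_drop iv.+1 v) hd.
rewrite (take_onth _ _ _ eA1) (take_onth _ _ _ eA2).
apply: brk_cat.
by rewrite -(take_onth _ _ _ eA1) -(take_onth _ _ _ eA2) b1 b2.
Qed.

Lemma wsim_refl v : v <> [::] -> wsimP v v.
Proof.
case: v => // A0 v' _; split=> //; split=> //.
exists (size (A0 :: v')).-1; split => //.
by exists A0; rewrite subnn; split => //=; rewrite take0 brk1.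
Qed.

Lemma class_single p X : brk (rcons p X) = cellA X ->
  wclass h tau tau' F b s t (rcons p X) = wclass h tau tau' F b s t [:: X].
Proof.
move=> e; apply: funext => u; apply: propext; rewrite /wclass; split.
  move=> hw; have eb := wsim_brk _ _ hw.
  move: hw => [_ [un [k [_ _ agr _]]]].
  have := agr 0%N (leq0n _); rewrite !subn0 size_rcons /= onth_rcons ltnn eqxx => eu.
  split => //; split => //; exists 0%N; split => //.
  - by move=> i; rewrite leqn0 => /eqP ->; rewrite !subn0.
  - exists X; rewrite !subn0; split => //; first by rewrite /= brk1.
    have su : size u = (size u).-1.+1 by case: (u) un.
    by rewrite -su take_size -eb e.
move=> [_ [un [k [k0 _ agr [A [eA1 eA2 b1 b2]]]]]].
move: k0; rewrite leqn0 => /eqP k0; subst k.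
have eXA : A = X by move: eA1 => /= [->].
subst A.
rewrite subn0 in eA2 b2.
have su : size u = (size u).-1.+1 by case: (u) un.
rewrite -su take_size in b2.
split; first by case: (p).
split => //; exists 0%N; split => //;
  try (by move=> i; rewrite leqn0 => /eqP ->; rewrite !subn0 size_rcons /= onth_rcons ltnn eqxx).
exists X; rewrite !subn0 size_rcons /= onth_rcons ltnn eqxx; split => //.
  by rewrite -(size_rcons p X) take_size.
by rewrite -su take_size.
Qed.


Lemma bopen_mem j (U : set R) (V : set T) r :
  b j @` (U `&` `[0, 1]%classic) = V `&` branch b j -> `[0, 1]%classic r ->
  (V (b j r) <-> U r).
Proof.
move=> E r01; split => [Vr|Ur].
  have : (V `&` branch b j) (b j r) by split => //; exists r.
  by rewrite -E => -[r' [Ur' r'01] e]; rewrite -(binj j r' r r'01 r01 e).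
have : (b j @` (U `&` `[0, 1]%classic)) (b j r) by exists r.
by rewrite E => -[].
Qed.

Lemma b0_TR j : TRs (b j 0).
Proof. by have : [set b j 0] (b j 0) by []; rewrite -bTR => -[]. Qed.

Section DSec.
Variables (A : pidx N) (u : R).
Hypothesis hu : s (tag A) (tagged A) <= u <= t (tag A) (tagged A).
Local Notation i := (tag A).
Local Notation j := (ell A).
Local Notation p := (pp A).
Local Notation sA := (s (tag A) (tagged A)).

Let I := b i @` `[sA, u]%classic.
Let K := [set z | exists2 y, I y & F y = sh p z].
Let D := [set v : R | 0 <= v <= 1 /\ K (b j v)].
Let Q := [set z | (TRs)° (sh p z)].

Let hs0 : 0 <= sA. Proof. by case: (bp1 i (tagged A)). Qed.
Let hst : sA <= t i (tagged A). Proof. by case: (bp1 i (tagged A)) => _ []. Qed.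
Let ht1 : t i (tagged A) <= 1. Proof. by case: (bp1 i (tagged A)) => _ []. Qed.
Let hu1 : sA <= u. Proof. by case/andP: hu. Qed.
Let hu2 : u <= t i (tagged A). Proof. by case/andP: hu. Qed.
Ltac hyps := move: (hs0) (hst) (ht1) (hu1) (hu2) => ? ? ? ? ?.

Let I_cell : I `<=` cellA A.
Proof. by move=> _ [r /itvP/andP[hr1 hr2] <-]; exists r => //; apply/itvP/andP; split; hyps; lra. Qed.

Let sub_I : `[sA, u]%classic `<=` (`[0, 1]%classic : set R).
Proof. by move=> r /itvP/andP[hr1 hr2]; apply/itvP/andP; split; hyps; lra. Qed.

Let K_img : K = (sh (- p) \o F) @` I.
Proof.
apply/seteqP; split => z.
  by move=> [y Iy e]; exists y => //=; rewrite e shiftK.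
by move=> [y Iy <-]; exists y => //=; rewrite shiftKV.
Qed.

Let cont_f : continuous (sh (- p) \o F).
Proof. by move=> x; apply: continuous_comp; [exact: HFc|exact: shift_cont]. Qed.

Let K_conn : connected K.
Proof.
rewrite K_img; apply: connected_continuous_connected; last exact: continuous_subspaceT.
apply: connected_continuous_connected; first exact: itv_conn.
exact: continuous_subspaceW sub_I (bcont i).
Qed.

Let K_comp : compact K.
Proof.
rewrite K_img; apply: continuous_compact; first exact: continuous_subspaceT.
apply: continuous_compact; last exact: segment_compact.
exact: continuous_subspaceW sub_I (bcont i).
Qed.

Let Q_open : open Q.
Proof. exact: open_comp (fun x _ => shift_cont p x) (@open_interior _ _). Qed.

Let Q_TR z : Q z -> TRs z.
Proof. by move=> /interior_subset /(shift_TR (- p)); rewrite shiftK. Qed.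

Let K_sub z : K z -> (exists2 r, `[0, 1]%classic r & z = b j r) \/ Q z.
Proof.
move=> [y Iy e].
have : (F @` cellA A) (F y) by exists y => //; apply: I_cell.
move/bp3 => [[e' [r r01 <-] ee]|Iz]; last by right; rewrite /Q /= -e.
by left; exists r => //; apply: (shift_inj p); rewrite ee e.
Qed.

Let D0 : D 0.
Proof.
split; first by apply/andP; split; lra.
exists (b i sA); last exact: bp4.
by exists sA => //; apply/itvP/andP; split; hyps; lra.
Qed.

Let Ddown v w : D v -> 0 < w -> w <= v -> D w.
Proof.
move=> [/andP[v0 v1] Kv] w0 wv.
have w01 : 0 <= w <= 1 by apply/andP; split; lra.
split => //.
apply: contrapT => nKw.
have wv' : w < v by rewrite lt_neqAle wv andbT; apply/eqP => e; subst w.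
have [V oV EV] := bopen j _ (@open_gt R w).
have [W oW EW] := bopen j _ (@open_lt R w).
pose O1 := V `&` ~` TRs.
pose O2 := W `|` Q.
have oO1 : open O1 by apply: openI => //; apply: closed_openC; apply: closed_closure.
have oO2 : open O2 by apply: openU.
have key : K `&` O1 = K.
  apply: K_conn.
  - exists (b j v); split => //; split.
      by apply/(bopen_mem j _ _ v EV) => //; apply/itvP; lra.
    by apply: (b_notTR j v); apply/andP; split; lra.
  - by exists O1.
  - exists (~` O2); first exact: open_closedC.
    apply/seteqP; split => z [Kz Oz]; split => //.
      move: Oz => [Vz nTz] [Wz|Qz]; last exact/nTz/Q_TR.
      case: (K_sub z Kz) => [[r r01 ez]|Qz]; last exact/nTz/Q_TR.
      rewrite ez in Vz Wz.
      move/(bopen_mem j _ _ r EV r01): Vz; move/(bopen_mem j _ _ r EW r01): Wz.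
      rewrite /=; lra.
    case: (K_sub z Kz) => [[r r01 ez]|Qz]; last by exfalso; apply: Oz; right.
    have [rw|rw|rw] := ltgtP r w.
    + by exfalso; apply: Oz; left; rewrite ez; apply/(bopen_mem j _ _ r EW r01).
    + split; first by rewrite ez; apply/(bopen_mem j _ _ r EV r01).
      rewrite ez; apply: b_notTR; move/itvP: r01 => /andP[_ r1]; apply/andP; split => //; lra.
    + by exfalso; apply: nKw; rewrite -rw -ez.
have : K (b j 0) by case: D0.
by rewrite -key => -[_ [_ /(_ (b0_TR j))]].
Qed.


Let Dmax : exists2 us, D us & forall v, D v -> v <= us.
Proof.
have hs : has_sup D.
  split; first by exists 0.
  by exists 1 => v [/andP[_ ?] _].
set us := sup D.
have ub : forall v, D v -> v <= us by move=> v Dv; apply: sup_upper_bound.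
exists us => //.
apply: contrapT => nD.
have us0 : 0 < us.
  rewrite lt_neqAle; have -> : 0 <= us by apply: ub.
  by rewrite andbT; apply/eqP => e; apply: nD; rewrite -e.
pose G := filter_from [set e : R | 0 < e]
  (fun e => b j @` [set v | D v /\ us - e < v]).
have GF : ProperFilter G.
  apply: filter_from_proper; last first.
    move=> e e0; have [v Dv hv] := sup_adherent e0 hs.
    by exists (b j v); exists v.
  apply: filter_from_filter; first by exists 1 => /=; lra.
  move=> e1 e2 h1 h2; exists (Num.min e1 e2); first by rewrite /= lt_min; apply/andP.
  move=> _ [v [Dv hv] <-].
  have m1 : Num.min e1 e2 <= e1 by rewrite ge_min lexx.
  have m2 : Num.min e1 e2 <= e2 by rewrite ge_min lexx orbT.
  by split; exists v => //; split => //; lra.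
have GK : G K by exists 1 => /=; [lra|move=> _ [v [[_ Kv] _] <-]].
have [q [Kq clq]] := K_comp G GF GK.
case: (K_sub q Kq) => [[r r01 eq]|Qq].
  have Dr : D r by split; [apply/itvP|rewrite -eq].
  have rus : r < us.
    by rewrite lt_neqAle ub // andbT; apply/eqP => e; apply: nD; rewrite -e.
  pose m := (r + us) / 2.
  have [W oW EW] := bopen j _ (@open_lt R m).
  have Wr : W q by rewrite eq; apply/(bopen_mem j _ _ r EW r01) => /=; rewrite /m; lra.
  have Gm : G (b j @` [set v | D v /\ us - (us - m) < v]).
    by exists (us - m) => //=; rewrite /m; lra.
  have [_ [[v [[v01 Kv] hv] <-] Wv]] := clq _ _ Gm (open_nbhs_nbhs (conj oW Wr)).
  move/itvP: r01 => r01.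
  have v01' : `[0, 1]%classic v by apply/itvP.
  by move/(bopen_mem j _ _ v EW v01'): Wv => /=; lra.
have Gm : G (b j @` [set v | D v /\ us - us < v]) by exists us.
have [_ [[v [[v01 Kv] hv] <-] Qv]] := clq _ _ Gm (open_nbhs_nbhs (conj Q_open Qq)).
apply: (b_notTR j v); last exact: Q_TR.
by case/andP: v01 => _ ->; rewrite andbT; lra.
Qed.

Lemma Dlem : exists us, 0 <= us <= 1 /\ forall v, 0 <= v <= 1 ->
  ((exists2 y, I y & F y = sh p (b j v)) <-> v <= us).
Proof.
have [us [us01 Kus] mx] := Dmax.
exists us; split => // v v01; split => [Kv|vus]; first exact: mx.
have [->|v0] := eqVneq v 0; first by case: D0.
have v0' : 0 < v by rewrite lt_neqAle eq_sym v0; case/andP: v01.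
by case: (Ddown us v (conj us01 Kus) v0' vus).
Qed.

End DSec.


Lemma tag_next x A B c : brk (rcons (rcons x A) B) c -> tag B = ell A.
Proof.
rewrite brk_rec => -[cB [y By Fy]].
have : (F @` cellA A) (F y) by exists y => //; apply: brk_sub By.
move/bp3 => [[e eb ee]|Iy]; last first.
  by exfalso; apply: (notIntTR (pp A) c (cell_X _ _ cB)); rewrite -Fy.
have ec : e = c by apply: (shift_inj (pp A)); rewrite ee.
apply/eqP; apply: contraT => ne.
have : (branch b (tag B) `&` branch b (ell A)) c.
  by split; [exact: cell_branch|rewrite -ec].
by rewrite bdisj.
Qed.

Lemma brk_int w A : brk (rcons w A) !=set0 ->
  exists u, s (tag A) (tagged A) <= u <= t (tag A) (tagged A) /\
    brk (rcons w A) = b (tag A) @` `[s (tag A) (tagged A), u]%classic.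
Proof.
elim/last_ind: w A => [|w' A' IH] A.
  move=> _; exists (t (tag A) (tagged A)); split; last by rewrite brk1.
  by have [? [? ?]] := bp1 (tag A) (tagged A); apply/andP; split.
move=> [c0 Bc0].
have e := tag_next _ _ _ _ Bc0.
move: Bc0; rewrite brk_rec => -[c0A [y0 By0 Fy0]].
have [u' [hu' E]] := IH A' (ex_intro _ y0 By0).
have [us [us01 Hus]] := Dlem A' u' hu'.
have eb : b (tag A) = b (ell A') by rewrite e.
have [hs0 [hst ht1]] := bp1 (tag A) (tagged A).
set sA := s (tag A) (tagged A) in c0A hs0 hst *.
set tA := t (tag A) (tagged A) in c0A hst ht1 *.
have key : forall r, sA <= r <= tA ->
    ((exists2 y, brk (rcons w' A') y & F y = sh (pp A') (b (tag A) r)) <-> r <= us).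
  move=> r /andP[r1 r2]; rewrite E eb; apply: Hus; apply/andP; split; lra.
move: c0A => [r0 /itvP/andP[r01 r02] er0].
have hr0 : sA <= r0 <= tA by apply/andP; split.
have r0us : r0 <= us by apply/(key r0 hr0); exists y0 => //; rewrite er0.
exists (Num.min tA us); split.
  apply/andP; split; last by rewrite ge_min lexx.
  by rewrite le_min; apply/andP; split => //; lra.
apply/seteqP; split.
  move=> _ [[r /itvP/andP[r1 r2] <-] [y By Fy]].
  have hr : sA <= r <= tA by apply/andP.
  have rus : r <= us by apply/(key r hr); exists y.
  by exists r => //; apply/itvP; rewrite r1 le_min r2 rus.
move=> z [r /itvP/andP[r1 +] ez]; rewrite le_min => /andP[r2 rus]; subst z.
have hr : sA <= r <= tA by apply/andP.
have [y By Fy] := (key r hr).2 rus.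
split; last by exists y.
by exists r => //; apply/itvP/andP.
Qed.



Local Notation wcl := (wclass h tau tau' F b s t).

Lemma main_sec a c :
  is_vertex h tau tau' F b s t a ->
  is_vertex h tau tau' F b s t c ->
  arrow h tau tau' F b s t a c ->
  exists (w : seq (pidx N)) (An Anext : pidx N) (k : 'I_(N (ell An))),
    [/\ a = wcl (rcons w An),
        c = wcl (rcons (rcons w An) Anext),
        Anext = mkp k &
        forall j : 'I_(N (ell An)), (j < k)%N ->
          pcovers tau tau' F b 1 (tag An)
            (brk (rcons w An))
            (ell An) (s (ell An) j) (t (ell An) j) (pp An)
          /\ arrow h tau tau' F b s t a (vtx h tau tau' F b s t (mkp j))].
Proof.
move=> va vc [_ _ [w [A [wn [ea ec]]]]].
case/lastP: w wn ea ec => [//|w0 An] _ ea ec.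
have [v [vn [z Bz]] ecv] := vc.
have cv : c v by rewrite ecv; apply: wsim_refl.
rewrite ec in cv.
have eB := wsim_brk _ _ cv.
have Bz' : brk (rcons (rcons w0 An) A) z by rewrite eB.
have etag := tag_next _ _ _ _ Bz'.
case: A etag ec Bz' {eB cv} => iA kA /= etag ec Bz'.
subst iA.
exists w0, An, (mkp kA), kA; split => //.
move=> j jk.
have [c0 [c0A [y0 By0 Fy0]]] : exists c0, cellA (mkp kA) c0 /\ exists2 y, brk (rcons w0 An) y & F y = sh (pp An) c0.
  by move: Bz'; rewrite brk_rec => -[? ?]; exists z.
have [u [hu EI]] := brk_int w0 An (ex_intro _ y0 By0).
have [us [us01 Hus]] := Dlem An u hu.
move: c0A => [r /itvP/andP[r1 r2] er].
have [hsk [hstk htk]] := bp1 (ell An) kA.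
have [hsj [hstj htj]] := bp1 (ell An) j.
have tjsk := bp2 (ell An) j kA jk.
have [hs0 [hst ht1]] := bp1 (tag An) (tagged An).
have [hu1 hu2] : s (tag An) (tagged An) <= u /\ u <= t (tag An) (tagged An) by apply/andP.
have rus : r <= us.
  apply/(Hus r); first by apply/andP; split; lra.
  by exists y0; [rewrite -EI|rewrite Fy0 -er].
have y0I := By0; rewrite EI in y0I; move: y0I => [r' /itvP/andP[r'1 r'2] er'].
split.
  split.
  - split => //; exists (s (tag An) (tagged An)), u; split => //; lra.
  - exact: hsj.
  - exact: hstj.
  - exact: htj.
  exists (b (tag An) (s (tag An) (tagged An))), y0; split => //.
  - by rewrite EI; exists (s (tag An) (tagged An)) => //; apply/itvP/andP; split; lra.
  - exists (s (tag An) (tagged An)), r'; split => //.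
      by rewrite in_itv /=; apply/andP; split; lra.
    by rewrite in_itv /=; apply/andP; split; lra.
  - rewrite /= bp4 shiftK /rj; case: ifP => _.
      exists 0, (s (ell An) j); split => //; rewrite in_itv /=; apply/andP; split; lra.
    exists 0, (s (ell An) j); split => //; rewrite in_itv /=; apply/andP; split; lra.
  - rewrite /= Fy0 shiftK -er /rj asboolT; last by exists r => //; apply/itvP/andP; split; lra.
    exists (t (ell An) j), r; split => //; try (rewrite in_itv /=; apply/andP; split; lra).
    lra.
split => //.
  exists [:: mkp j]; last by [].
  split => //; rewrite brk1; exists (b (ell An) (s (ell An) j)).
  by exists (s (ell An) j) => //; apply/itvP/andP; split; lra.
exists (rcons w0 An), (mkp j); split; first by rewrite -cats1; case: (w0).
split => //.
rewrite /vtx -(class_single (rcons w0 An) (mkp j)) //.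
rewrite brk_rec; apply/seteqP; split => [c' [] //|c' cc'].
split => //.
move: (cc') => [r'' /itvP/andP[r''1 r''2] <-].
have hr'' : 0 <= r'' <= 1 by apply/andP; split; lra.
have := (Hus r'' hr'').2; rewrite -EI; apply; lra.
Qed.

End Main.

Theorem mainTheorem13 (R : realType) (T : topologicalType)
  (h : R -> T) (tau tau' : T -> T) (F : T -> T)
  (L : finType) (b : L -> R -> T)
  (N : L -> nat) (s t : forall i : L, 'I_(N i) -> R)
  (ell : pidx N -> L) (pp : pidx N -> int)
  (a c : set (seq (pidx N))) :
  lifted_graph h tau tau' ->
  continuous F ->
  degree_one tau F ->
  sun_like h F b ->
  basic_partition h tau tau' F b s t ell pp ->
  is_vertex h tau tau' F b s t a ->
  is_vertex h tau tau' F b s t c ->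
  arrow h tau tau' F b s t a c ->
  exists (w : seq (pidx N)) (An Anext : pidx N) (k : 'I_(N (ell An))),
    [/\ a = wclass h tau tau' F b s t (rcons w An),
        c = wclass h tau tau' F b s t (rcons (rcons w An) Anext),
        Anext = mkp k &
        forall j : 'I_(N (ell An)), (j < k)%N ->
          pcovers tau tau' F b 1 (tag An)
            (bracket h tau tau' F b s t (rcons w An))
            (ell An) (s (ell An) j) (t (ell An) j) (pp An)
          /\ arrow h tau tau' F b s t a (vtx h tau tau' F b s t (mkp j))].
Proof.
move=> HLG HFc HD HS HB va vc ar.
by apply: main_sec.
Qed.
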